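(* Let $\mathbb{K}$ be a perfect field, $\mathbf{u}_1,\dots,\mathbf{u}_t\in\mathbb{K}^{\mathbb{N}^n}$ with $J=\mathrm{ann}(\mathbf{u}_1,\dots,\mathbf{u}_t)$ zero-dimensional, and $B$ an integer such that for every $j$ the minimal polynomial of $X_j$ in $\mathbb{K}[X_1,\dots,X_n]/J$ has degree at most $B$. Fix $j\in\{1,\dots,n\}$ and a sequence of monomials $\mathscr{B}'_{j+1}$ in $\mathbb{K}[X_{j+1},\dots,X_n]$ (with $\mathscr{B}'_{n+1}=(1)$ if $j=n$) of cardinality at most $D_{j+1}$. Let $\mathscr{C}_{j+1}=\{b'X_j^k : b'\in\mathscr{B}'_{j+1},\ 0\le k\le B-1\}$, and let $\mathsf{M}$ be the matrix with rows indexed by pairs $(i,b')$, $1\le i\le t$, $b'\in\mathscr{C}_{j+1}$, columns indexed by $b\in\mathscr{C}_{j+1}$ sorted increasingly for the lexicographic order $X_j>\cdots>X_n$, and entries $\langle\mathbf{u}_i\mid bb'\rangle$. Let $\mathscr{B}'_j=(b'_1<\cdots<b'_{D'_j})$ be the monomials indexing the pivot columns of the reduced row echelon form of $\mathsf{M}$. Then $D'_j\le D_j$; and if $j\le n-1$, $\mathscr{B}'_{j+1}=\mathscr{B}_{j+1}$ and $J_j\cap\mathbb{K}[X_{j+1},\dots,X_n]=J_{j+1}$, then $\mathscr{B}'_j=\mathscr{B}_j$.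
   Context: For $m\in\mathbb{N}^n$, $\mathbf{X}^m=X_1^{m_1}\cdots X_n^{m_n}$; for a sequence $\mathbf{u}=(u_m)_m$ and $f=\sum_mf_m\mathbf{X}^m$, $\langle\mathbf{u}\mid f\rangle=\sum_mf_mu_m$, $f\cdot\mathbf{u}=(\langle\mathbf{u}\mid\mathbf{X}^mf\rangle)_m$, $\mathrm{ann}(\mathbf{u})$ is the ideal of $f$ with $f\cdot\mathbf{u}=0$, and $\mathrm{ann}$ of several sequences is the intersection. $\pi_j(\mathbf{u}_i)$ is the sequence indexed by $\mathbb{N}^{n-j+1}$ with $\langle\pi_j(\mathbf{u}_i)\mid(m_j,\dots,m_n)\rangle=\langle\mathbf{u}_i\mid(0,\dots,0,m_j,\dots,m_n)\rangle$; $J_j=\mathrm{ann}(\pi_j(\mathbf{u}_1),\dots,\pi_j(\mathbf{u}_t))\subset\mathbb{K}[X_j,\dots,X_n]$, $D_j=\dim_{\mathbb{K}}\mathbb{K}[X_j,\dots,X_n]/J_j$, and $\mathscr{B}_j$ is the monomial basis (standard monomials) of $\mathbb{K}[X_j,\dots,X_n]/J_j$ for the lexicographic order $X_j>\cdots>X_n$. *)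

(* Defs.v *)
From HB Require Import structures.
From mathcomp Require Import all_boot all_order all_algebra.
From mathcomp Require Import mpoly.
From Stdlib Require Import ClassicalEpsilon.

Set Implicit Arguments.
Unset Strict Implicit.
Unset Printing Implicit Defensive.

Import Order.TTheory GRing.Theory.
Local Open Scope ring_scope.

Definition perfect_field (K : fieldType) : Prop :=
  [pchar K] =i pred0 \/
  exists p : nat, p \in [pchar K] /\ forall x : K, exists y : K, y ^+ p = x.

Section Defs.
Variables (K : fieldType) (n : nat).

(* Sequences in K^(N^n) : functions 'X_{1..n} -> K. *)
Definition pairing (u : 'X_{1..n} -> K) (f : {mpoly K[n]}) : K :=
  \sum_(m <- msupp f) f@_m * u m.

Definition ann t (u : 'I_t -> 'X_{1..n} -> K) (f : {mpoly K[n]}) : Prop :=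
  forall (i : 'I_t) (m : 'X_{1..n}), pairing (u i) ('X_[m] * f) = 0.

(* Variables are 'I_n, variable X_k (1-based, paper) is index k-1.
   A monomial of K[X_j,...,X_n] (j 1-based, 1 <= j <= n+1) has zero exponent
   on X_1,...,X_{j-1}. *)
Definition mono_from (j : nat) (m : 'X_{1..n}) : Prop :=
  forall k : 'I_n, (k.+1 < j)%N -> m k = 0%N.

Definition poly_from (j : nat) (f : {mpoly K[n]}) : Prop :=
  forall m, m \in msupp f -> mono_from j m.

(* J_j = ann(pi_j(u_1),...,pi_j(u_t)) in K[X_j,...,X_n], via the embedding:
   <pi_j(u) | g> = <u | g> for g in K[X_j..X_n], and the shifts X^m' range
   over monomials of K[X_j..X_n]. *)
Definition Jj t (u : 'I_t -> 'X_{1..n} -> K) (j : nat) (f : {mpoly K[n]}) : Prop :=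
  poly_from j f /\
  forall (i : 'I_t) (m : 'X_{1..n}), mono_from j m ->
    pairing (u i) ('X_[m] * f) = 0.

Definition free_mod (I : {mpoly K[n]} -> Prop) (s : seq {mpoly K[n]}) : Prop :=
  forall c : 'I_(size s) -> K,
    I (\sum_(i < size s) c i *: s`_i) -> forall i, c i = 0.

Definition is_qdim (S I : {mpoly K[n]} -> Prop) (d : nat) : Prop :=
  (exists s : seq {mpoly K[n]}, size s = d /\ (forall p, p \in s -> S p) /\ free_mod I s)
  /\ (forall s : seq {mpoly K[n]}, (forall p, p \in s -> S p) -> free_mod I s ->
        (size s <= d)%N).

(* dim_K S/I (meaningful when finite, which is the case wherever it is used). *)
Definition qdim (S I : {mpoly K[n]} -> Prop) : nat :=
  epsilon (inhabits 0%N) (is_qdim S I).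

Definition finite_quot (I : {mpoly K[n]} -> Prop) : Prop :=
  exists d : nat, forall s : seq {mpoly K[n]}, free_mod I s -> (size s <= d)%N.

Definition Dj t (u : 'I_t -> 'X_{1..n} -> K) (j : nat) : nat :=
  qdim (poly_from j) (Jj u j).

Definition lexlt (m1 m2 : 'X_{1..n}) : bool :=
  [exists i : 'I_n, [forall k : 'I_n, (k < i)%N ==> (m1 k == m2 k)] && (m1 i < m2 i)%N].
Definition lexle (m1 m2 : 'X_{1..n}) : bool := (m1 == m2) || lexlt m1 m2.

Definition is_lexlead (f : {mpoly K[n]}) (m : 'X_{1..n}) : Prop :=
  m \in msupp f /\ forall m', m' \in msupp f -> lexle m' m.

Definition std_mono t (u : 'I_t -> 'X_{1..n} -> K) (j : nat) (m : 'X_{1..n}) : Prop :=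
  mono_from j m /\ ~ (exists f, Jj u j f /\ is_lexlead f m).

(* Xpow j k : the exponent vector of X_j^k (j 1-based). *)
Definition Xpow (j k : nat) : 'X_{1..n} :=
  [multinom (if (i : nat) == j.-1 then k else 0%N) | i < n].

Definition Cset (j : nat) (Bp : seq 'X_{1..n}) (B : nat) : seq 'X_{1..n} :=
  sort lexle (undup [seq (b' + Xpow j k)%MM | b' <- Bp, k <- iota 0 B]).

Definition Mmat t (u : 'I_t -> 'X_{1..n} -> K) (C : seq 'X_{1..n}) :
    'M[K]_(#|{: 'I_t * 'I_(size C)}|, size C) :=
  \matrix_(r < #|{: 'I_t * 'I_(size C)}|, c < size C)
    let: (i, a) := (enum_val r : 'I_t * 'I_(size C)) in pairing (u i) 'X_[(nth 0%MM C a + nth 0%MM C c)%MM].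

End Defs.

Section RREF.
Variables (K : fieldType) (r c : nat).

Definition lead_pos (R : 'M[K]_(r, c)) (i : 'I_r) : option 'I_c :=
  [pick p : 'I_c | (R i p != 0) && [forall q : 'I_c, (q < p)%N ==> (R i q == 0)]].

Definition is_rref (R : 'M[K]_(r, c)) : Prop :=
  (* zero rows at the bottom, leading positions strictly increasing *)
  (forall i1 i2 : 'I_r, (i1 < i2)%N -> forall p2, lead_pos R i2 = Some p2 ->
     exists2 p1, lead_pos R i1 = Some p1 & (p1 < p2)%N) /\
  (forall i p, lead_pos R i = Some p ->
     R i p = 1 /\ forall i', i' != i -> R i' p = 0).

Definition pivot_col (R : 'M[K]_(r, c)) (p : 'I_c) : bool :=
  [exists i : 'I_r, lead_pos R i == Some p].

Definition rref_of (M R : 'M[K]_(r, c)) : Prop :=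
  is_rref R /\ exists2 P : 'M[K]_r, P \in unitmx & R = P *m M.

End RREF.

(* Main.v *)
Require Import Defs.
From HB Require Import structures.
From mathcomp Require Import all_boot all_order all_algebra.
From mathcomp Require Import mpoly.
From mathcomp Require Import ssrcomplements zify ring.
From Stdlib Require Import ClassicalEpsilon Classical.
Set Implicit Arguments. Unset Strict Implicit. Unset Printing Implicit Defensive.
Import Order.TTheory GRing.Theory.
Local Open Scope ring_scope.


Section Lex.
Variable n : nat.
Implicit Types m : 'X_{1..n}.

Definition tl m : n.-tuplelexi nat := multinom_val m.

Lemma lexltE m1 m2 : lexlt m1 m2 = (tl m1 < tl m2)%O.
Proof.
apply/idP/idP.
- case/existsP=> i /andP[/forallP H lt]; apply/ltxi_tuplePlt; exists i => //.
  by move=> k ki; have /implyP/(_ ki)/eqP := H k.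
- case/ltxi_tuplePlt=> i H lt; apply/existsP; exists i; apply/andP; split=> //.
  by apply/forallP=> k; apply/implyP=> ki; apply/eqP; apply: H.
Qed.

Lemma tl_inj : injective tl.
Proof. by move=> [a] [b] /= ->. Qed.

Lemma lexleE m1 m2 : lexle m1 m2 = (tl m1 <= tl m2)%O.
Proof.
by rewrite /lexle lexltE le_eqVlt (inj_eq tl_inj).
Qed.

Lemma lexlt_trans m2 m1 m3 : lexlt m1 m2 -> lexlt m2 m3 -> lexlt m1 m3.
Proof. rewrite !lexltE; exact: lt_trans. Qed.
Lemma lexle_trans m2 m1 m3 : lexle m1 m2 -> lexle m2 m3 -> lexle m1 m3.
Proof. rewrite !lexleE; exact: le_trans. Qed.
Lemma lexle_lt_trans m2 m1 m3 : lexle m1 m2 -> lexlt m2 m3 -> lexlt m1 m3.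
Proof. rewrite lexleE !lexltE; exact: le_lt_trans. Qed.
Lemma lexlt_le_trans m2 m1 m3 : lexlt m1 m2 -> lexle m2 m3 -> lexlt m1 m3.
Proof. rewrite lexleE !lexltE; exact: lt_le_trans. Qed.
Lemma lexltNge m1 m2 : lexlt m1 m2 = ~~ lexle m2 m1.
Proof. by rewrite lexleE lexltE ltNge. Qed.
Lemma lexle_refl m : lexle m m.
Proof. by rewrite lexleE. Qed.
Lemma lexle_total : total (@lexle n).
Proof. by move=> a b; rewrite !lexleE le_total. Qed.
Lemma lexle_anti m1 m2 : lexle m1 m2 -> lexle m2 m1 -> m1 = m2.
Proof. by rewrite !lexleE => a b; apply: tl_inj; apply/le_anti/andP. Qed.
Lemma lexle_ltW m1 m2 : lexlt m1 m2 -> lexle m1 m2.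
Proof. by rewrite /lexle => ->; rewrite orbT. Qed.
Lemma lexlt_neq m1 m2 : lexlt m1 m2 -> m1 != m2.
Proof. by rewrite lexltE => H; apply/eqP=> E; move: H; rewrite E ltxx. Qed.

Lemma lexlt_add m1 m2 c : lexlt m1 m2 -> lexlt (m1 + c)%MM (m2 + c)%MM.
Proof.
case/existsP=> i /andP[/forallP H lt]; apply/existsP; exists i; apply/andP; split.
  apply/forallP=> k; apply/implyP=> ki; rewrite !mnmDE.
  by have /implyP/(_ ki)/eqP-> := H k.
by rewrite !mnmDE ltn_add2r.
Qed.
Lemma lexle_add m1 m2 c : lexle m1 m2 -> lexle (m1 + c)%MM (m2 + c)%MM.
Proof.
by case/orP=> [/eqP->|/(lexlt_add c) H]; [apply: lexle_refl|apply: lexle_ltW].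
Qed.

Lemma nat_wf (P : nat -> Type) :
  (forall x, (forall y, (y < x)%O -> P y) -> P x) -> forall x, P x.
Proof.
move=> ih x; elim: x {-2}x (leqnn x).
  move=> x; rewrite leqn0=> /eqP->; apply/ih.
  by move=> y; rewrite ltEnat/= ltn0.
move=> k wih l le_l_Sk; apply/ih=> y; rewrite ltEnat => lt_yl.
by apply/wih; have := leq_trans lt_yl le_l_Sk; rewrite ltnS.
Qed.

Lemma lex_ind (P : 'X_{1..n} -> Prop) :
  (forall m, (forall m', lexlt m' m -> P m') -> P m) -> forall m, P m.
Proof.
move=> ih m.
pose Q (t : n.-tuplelexi nat) := forall m, tl m = t -> P m.
suff: Q (tl m) by apply.
apply: (@ltxwf _ nat nat_wf n Q) => t IH m' Em'; apply: ih => m'' lt.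
by apply: (IH (tl m'')) => //; rewrite -Em' -lexltE.
Qed.
End Lex.

Section Poly.
Variables (K : fieldType) (n : nat).
Implicit Types (f g h : {mpoly K[n]}) (m : 'X_{1..n}) (v : 'X_{1..n} -> K).

Lemma pairing_sub v f s : uniq s -> {subset msupp f <= s} ->
  pairing v f = \sum_(m <- s) f@_m * v m.
Proof.
move=> Us Hs; rewrite (bigID (fun m => m \in msupp f)) /=.
rewrite [X in _ + X]big1 ?addr0; last first.
  by move=> m /memN_msupp_eq0 ->; rewrite mul0r.
rewrite -big_filter /pairing; apply: perm_big; apply: uniq_perm.
- exact: msupp_uniq.
- exact: filter_uniq.
- by move=> m; rewrite mem_filter; apply/idP/andP => [H|[]//]; split => //; apply: Hs.
Qed.

Lemma pairingD v f g : pairing v (f + g) = pairing v f + pairing v g.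
Proof.
set s := undup (msupp f ++ msupp g ++ msupp (f + g)).
have Us : uniq s by apply: undup_uniq.
rewrite !(@pairing_sub v _ s) //; last 3 first.
- by move=> m H; rewrite mem_undup !mem_cat H /= ?orbT.
- by move=> m H; rewrite mem_undup !mem_cat H /= ?orbT.
- by move=> m H; rewrite mem_undup !mem_cat H /= ?orbT.
by rewrite -big_split; apply: eq_bigr => m _; rewrite mcoeffD mulrDl.
Qed.

Lemma pairingZ v c f : pairing v (c *: f) = c * pairing v f.
Proof.
rewrite (@pairing_sub v _ (msupp f)) ?msupp_uniq //; last exact: msuppZ_le.
rewrite /pairing big_distrr; apply: eq_bigr => m _ /=; by rewrite mcoeffZ mulrA.
Qed.

Lemma pairing0 v : pairing v 0 = 0.
Proof. by rewrite /pairing msupp0 big_nil. Qed.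

Lemma pairingN v f : pairing v (- f) = - pairing v f.
Proof. by rewrite -scaleN1r pairingZ mulN1r. Qed.

Lemma pairingB v f g : pairing v (f - g) = pairing v f - pairing v g.
Proof. by rewrite pairingD pairingN. Qed.

Lemma pairing_sum v (I : Type) (r : seq I) (P : pred I) (F : I -> {mpoly K[n]}) :
  pairing v (\sum_(i <- r | P i) F i) = \sum_(i <- r | P i) pairing v (F i).
Proof. by apply: (big_morph _ (pairingD v) (pairing0 v)). Qed.

Lemma pairingX v m : pairing v 'X_[m] = v m.
Proof. by rewrite /pairing msuppX big_seq1 mcoeffX eqxx mul1r. Qed.

Lemma mono_fromD j m1 m2 : mono_from j m1 -> mono_from j m2 -> mono_from j (m1 + m2)%MM.
Proof. by move=> H1 H2 k Hk; rewrite mnmDE H1 // H2. Qed.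

Lemma mono_from0 j : mono_from j (0%MM : 'X_{1..n}).
Proof. by move=> k _; rewrite mnm0E. Qed.

Lemma mono_fromS j m : mono_from j.+1 m -> mono_from j m.
Proof. by move=> H k Hk; apply: H; apply: ltn_trans Hk _. Qed.

Lemma poly_from0 j : poly_from j (0 : {mpoly K[n]}).
Proof. by move=> m; rewrite msupp0. Qed.

Lemma poly_fromD j f g : poly_from j f -> poly_from j g -> poly_from j (f + g).
Proof. by move=> Hf Hg m /msuppD_le; rewrite mem_cat => /orP[/Hf|/Hg]. Qed.

Lemma poly_fromZ j c f : poly_from j f -> poly_from j (c *: f).
Proof. by move=> Hf m /msuppZ_le /Hf. Qed.

Lemma poly_fromN j f : poly_from j f -> poly_from j (- f).
Proof. by move=> Hf; rewrite -scaleN1r; apply: poly_fromZ. Qed.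

Lemma poly_fromB j f g : poly_from j f -> poly_from j g -> poly_from j (f - g).
Proof. by move=> Hf Hg; apply: poly_fromD => //; apply: poly_fromN. Qed.

Lemma poly_from_sum j (I : Type) (r : seq I) (P : pred I) (F : I -> {mpoly K[n]}) :
  (forall i, P i -> poly_from j (F i)) -> poly_from j (\sum_(i <- r | P i) F i).
Proof.
move=> H; elim/big_rec: _ => [|i x Pi Hx]; first exact: poly_from0.
by apply: poly_fromD => //; apply: H.
Qed.

Lemma poly_fromX j m : mono_from j m -> poly_from j ('X_[m] : {mpoly K[n]}).
Proof. by move=> H m'; rewrite msuppX mem_seq1 => /eqP->. Qed.

Lemma msuppXM m f m' : m' \in msupp ('X_[m] * f) -> exists2 m'', m'' \in msupp f & m' = (m + m'')%MM.
Proof.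
rewrite -commr_mpolyX (perm_mem (msuppMX _ _)) => /mapP[m'' H ->].
by exists m''.
Qed.

Lemma poly_fromXM j m f : mono_from j m -> poly_from j f -> poly_from j ('X_[m] * f).
Proof.
move=> Hm Hf m' /msuppXM[m'' /Hf H ->]; exact: mono_fromD.
Qed.

Lemma poly_fromM j f g : poly_from j f -> poly_from j g -> poly_from j (f * g).
Proof.
move=> Hf Hg; rewrite (mpolyE f) big_seq big_distrl /=; apply: poly_from_sum => m Hm.
rewrite -scalerAl; apply: poly_fromZ; apply: poly_fromXM => //; exact: Hf.
Qed.
End Poly.

Section Ideal.
Variables (K : fieldType) (n t : nat) (u : 'I_t -> 'X_{1..n} -> K) (j : nat).
Implicit Types (f g h : {mpoly K[n]}) (m : 'X_{1..n}).
Local Notation I := (Jj u j).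

Lemma Jj_poly f : I f -> poly_from j f.
Proof. by case. Qed.

Lemma Jj_pair f i : I f -> pairing (u i) f = 0.
Proof. by case=> _ H; have := H i 0%MM (@mono_from0 n j); rewrite mpolyX0 mul1r. Qed.

Lemma Jj0 : I 0.
Proof. split; first exact: poly_from0. by move=> i m _; rewrite mulr0 pairing0. Qed.

Lemma JjD f g : I f -> I g -> I (f + g).
Proof.
move=> [Pf Hf] [Pg Hg]; split; first exact: poly_fromD.
by move=> i m Hm; rewrite mulrDr pairingD Hf // Hg // addr0.
Qed.

Lemma JjZ c f : I f -> I (c *: f).
Proof.
move=> [Pf Hf]; split; first exact: poly_fromZ.
by move=> i m Hm; rewrite -scalerAr pairingZ Hf // mulr0.
Qed.

Lemma JjN f : I f -> I (- f).
Proof. by move=> H; rewrite -scaleN1r; apply: JjZ. Qed.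

Lemma JjB f g : I f -> I g -> I (f - g).
Proof. by move=> Hf Hg; apply: JjD => //; apply: JjN. Qed.

Lemma Jj_sum (J : Type) (r : seq J) (P : pred J) (F : J -> {mpoly K[n]}) :
  (forall i, P i -> I (F i)) -> I (\sum_(i <- r | P i) F i).
Proof.
move=> H; elim/big_rec: _ => [|i x Pi Hx]; first exact: Jj0.
by apply: JjD => //; apply: H.
Qed.

Lemma JjXM m f : mono_from j m -> I f -> I ('X_[m] * f).
Proof.
move=> Hm [Pf Hf]; split; first exact: poly_fromXM.
move=> i m' Hm'; rewrite mulrA -mpolyXD; apply: Hf; exact: mono_fromD.
Qed.

Lemma JjM g f : poly_from j g -> I f -> I (g * f).
Proof.
move=> Hg Hf; rewrite (mpolyE g) big_seq big_distrl /=; apply: Jj_sum => m Hm.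
rewrite -scalerAl; apply: JjZ; apply: JjXM => //; exact: Hg.
Qed.

Lemma ann_Jj f : ann u f -> poly_from j f -> I f.
Proof. by move=> H P; split => // i m _; apply: H. Qed.

End Ideal.

Section Lead.
Variables (K : fieldType) (n : nat).
Implicit Types (f g h : {mpoly K[n]}) (m : 'X_{1..n}).

Lemma lead_XM f m a : is_lexlead f m -> is_lexlead ('X_[a] * f) (a + m)%MM.
Proof.
case=> Hm Hle; split.
  by rewrite -commr_mpolyX (perm_mem (msuppMX _ _)); apply: map_f.
move=> m' /msuppXM[m'' /Hle H ->]; rewrite ![(a + _)%MM]addmC; exact: lexle_add.
Qed.

End Lead.

Lemma max_exists (P : nat -> Prop) e : P 0%N -> (forall k, P k -> (k <= e)%N) ->
  exists k, P k /\ forall k', P k' -> (k' <= k)%N.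
Proof.
elim: e => [|e IH] P0 Hb.
  by exists 0%N; split => // k' /Hb.
case: (classic (P e.+1)) => He; first by exists e.+1; split.
apply: IH => // k Hk; have := Hb k Hk; rewrite leq_eqVlt ltnS => /orP[/eqP E|//].
by move: Hk; rewrite E.
Qed.

Section Qdim.
Variables (K : fieldType) (n : nat).

Lemma qdim_bound (S I : {mpoly K[n]} -> Prop) (d : nat) :
  (forall s, (forall p, p \in s -> S p) -> free_mod I s -> (size s <= d)%N) ->
  forall s, (forall p, p \in s -> S p) -> free_mod I s -> (size s <= qdim S I)%N.
Proof.
move=> Hd.
pose P k := exists s : seq {mpoly K[n]}, size s = k /\ (forall p, p \in s -> S p) /\ free_mod I s.
have [k [Pk Hk]] : exists k, P k /\ forall k', P k' -> (k' <= k)%N.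
  apply: (@max_exists P d).
    by exists [::]; split => //; split => // c _ [].
  by move=> k [s [<- [H1 H2]]]; apply: Hd.
have Hq : is_qdim S I k.
  split => // s H1 H2; apply: Hk; by exists s.
have := epsilon_spec (inhabits 0%N) (is_qdim S I) (ex_intro _ k Hq).
rewrite -/(qdim S I) => -[_ H] s H1 H2; exact: H.
Qed.
End Qdim.

Section FreeMap.
Variables (K : fieldType) (n : nat).

Lemma sum_seq_pred1 (T : eqType) (r : seq T) (y : T) (G : T -> {mpoly K[n]}) :
  uniq r -> y \in r -> \sum_(k <- r) (if y == k then G k else 0) = G y.
Proof.
move=> Ur yr; rewrite -big_mkcond /= -big_filter.
have -> : [seq k <- r | y == k] = [:: y].
  rewrite -(filter_pred1_uniq Ur yr); apply: eq_filter => k /=; by rewrite eq_sym.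
by rewrite big_seq1.
Qed.

Lemma free_map (I : {mpoly K[n]} -> Prop) (T : eqType) (F : T -> {mpoly K[n]}) (r : seq T) :
  uniq r ->
  (forall lam : T -> K, I (\sum_(k <- r) lam k *: F k) -> forall k, k \in r -> lam k = 0) ->
  free_mod I (map F r).
Proof.
move=> Ur H c Hc i.
have ir : (i < size r)%N by rewrite -(size_map F); exact: ltn_ord.
have [x0 _] : exists x0 : T, True.
  move: (i : nat) ir => i0; case: (r) => [|x r'] //; by exists x.
pose lam k := \sum_(i' < size (map F r) | nth x0 r i' == k) c i'.
have E : \sum_(k <- r) lam k *: F k = \sum_(i' < size (map F r)) c i' *: (map F r)`_i'.
  rewrite (eq_bigr (fun k => \sum_(i' < size (map F r)) (if nth x0 r i' == k then c i' *: F k else 0))); last first.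
    by move=> k _; rewrite scaler_suml big_mkcond.
  rewrite exchange_big /=; apply: eq_bigr => i' _.
  rewrite (sum_seq_pred1 (fun k => c i' *: F k)) //; last first.
    by apply: mem_nth; rewrite -(size_map F).
  by rewrite (nth_map x0) // -(size_map F).
have := H lam; rewrite E => /(_ Hc (nth x0 r i) (mem_nth _ ir)).
rewrite /lam (bigD1 i) //= big1 ?addr0 // => i' /andP[/eqP e ne].
exfalso; move/eqP: ne; apply; apply: val_inj; apply/eqP.
rewrite -(nth_uniq x0 _ _ Ur) ?e // -(size_map F) //. all: try exact: ltn_ord.
Qed.
End FreeMap.

Section RR.
Variables (K : fieldType) (r c : nat) (R : 'M[K]_(r, c)).

Lemma lead_some i p : lead_pos R i = Some p ->
  R i p != 0 /\ forall q : 'I_c, (q < p)%N -> R i q = 0.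
Proof.
rewrite /lead_pos; case: pickP => // x /andP[H1 /forallP H2] [<-]; split => // q Hq.
by have /implyP/(_ Hq)/eqP := H2 q.
Qed.

Lemma lead_none i : lead_pos R i = None -> forall q, R i q = 0.
Proof.
rewrite /lead_pos; case: pickP => // H _ q; apply/eqP; apply: contraT => Hq.
case: (@arg_minnP _ q (fun q => R i q != 0) (fun q : 'I_c => nat_of_ord q) Hq) => q0 Hq0 Hmin.
case/negP: (H q0); rewrite Hq0 /=; apply/forallP => q'.
apply/implyP => lt; apply: contraT => Hq'.
by have := Hmin q' Hq'; rewrite leqNgt lt.
Qed.

Lemma pivotP p : reflect (exists i, lead_pos R i = Some p) (pivot_col R p).
Proof. by apply: (iffP existsP) => -[i /eqP H]; exists i => //; apply/eqP. Qed.

Hypothesis HR : is_rref R.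

Lemma piv_one i p : lead_pos R i = Some p -> R i p = 1.
Proof. by case: HR => _ H /H []. Qed.

Lemma piv_zero i p i' : lead_pos R i = Some p -> i' != i -> R i' p = 0.
Proof. by case: HR => _ H /H [] _ H'; apply: H'. Qed.

Lemma PV3 i p (lam : 'I_c -> K) : lead_pos R i = Some p -> lam p = 1 ->
  (forall q : 'I_c, (p < q)%N -> lam q = 0) -> \sum_q R i q * lam q = 1.
Proof.
move=> Hl H1 H2; rewrite (bigD1 p) //= piv_one // H1 mulr1 big1 ?addr0 // => q ne.
case: (ltngtP q p) => [lt|gt|e].
- by rewrite (lead_some Hl).2 // mul0r.
- by rewrite H2 // mulr0.
- by move: ne; rewrite -(inj_eq val_inj) /= e eqxx.
Qed.

Lemma PV2 cc : ~~ pivot_col R cc -> exists lam : 'I_c -> K,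
  [/\ lam cc = 1, (forall q : 'I_c, (cc < q)%N -> lam q = 0) &
      forall i, \sum_q R i q * lam q = 0].
Proof.
move=> Hnp.
exists (fun q => (q == cc)%:R - \sum_(i | lead_pos R i == Some q) R i cc); split.
- rewrite eqxx big1 ?subr0 // => i /eqP Hi; case/negP: Hnp; apply/pivotP; by exists i.
- move=> q lt; have -> : (q == cc) = false by apply/negbTE; rewrite neq_ltn lt orbT.
  rewrite sub0r big1 ?oppr0 // => i /eqP Hi; exact: (lead_some Hi).2.
- move=> i; rewrite (eq_bigr (fun q => R i q * (q == cc)%:R - R i q * \sum_(i0 | lead_pos R i0 == Some q) R i0 cc)); last by move=> q _; rewrite mulrBr.
  rewrite sumrB (bigD1 cc) //= eqxx mulr1 big1 ?addr0; last first.
    by move=> q ne; rewrite (negbTE ne) mulr0.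
  apply/eqP; rewrite subr_eq0; apply/eqP.
  rewrite (eq_bigr (fun q => \sum_(i0 | lead_pos R i0 == Some q) R i q * R i0 cc)); last first.
    by move=> q _; rewrite big_distrr.
  rewrite (exchange_big_dep xpredT) //=.
  rewrite (eq_bigr (fun i0 => if lead_pos R i0 is Some p then R i p * R i0 cc else 0)); last first.
    move=> i0 _; case E: (lead_pos R i0) => [p|].
      rewrite (eq_bigl (fun q => q == p)) ?big_pred1_eq // => q.
      by rewrite eq_sym; apply/eqP/eqP => [[]|->].
    by rewrite big_pred0.
  case E: (lead_pos R i) => [p|]; last first.
    rewrite lead_none // big1 // => i0 _; case: (lead_pos R i0) => // p.
    by rewrite lead_none // mul0r.
  rewrite (bigD1 i) //= E (piv_one E) mul1r big1 ?addr0 // => i0 ne.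
  case E0: (lead_pos R i0) => [p0|] //.
  by rewrite (piv_zero E0) ?mul0r // eq_sym.
Qed.

End RR.

Lemma ker_mul (K : fieldType) (r r' c : nat) (A : 'M[K]_(r, c)) (B : 'M[K]_(r', r)) (lam : 'I_c -> K) :
  (forall i, \sum_q A i q * lam q = 0) -> forall i, \sum_q (B *m A) i q * lam q = 0.
Proof.
move=> H i.
rewrite (eq_bigr (fun q => \sum_k B i k * A k q * lam q)); last by move=> q _; rewrite mxE big_distrl.
rewrite exchange_big /= big1 // => k _.
rewrite (eq_bigr (fun q => B i k * (A k q * lam q))); last by move=> q _; rewrite mulrA.
by rewrite -big_distrr /= H mulr0.
Qed.

Section CS.
Variables (n : nat) (B j : nat) (Bp : seq 'X_{1..n}).
Hypothesis HBp : forall b, b \in Bp -> mono_from j.+1 b.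

Local Notation C := (Cset j Bp B).

Lemma Xpow_mono k : mono_from j (Xpow n j k).
Proof.
move=> i Hi; rewrite /Xpow mnmE; case: eqP => // E.
by move: Hi; rewrite E; case: (j) => //= j'; rewrite ltnn.
Qed.

Lemma C_uniq : uniq C.
Proof. by rewrite /Cset sort_uniq undup_uniq. Qed.

Lemma C_sorted : sorted (@lexle n) C.
Proof. apply: sort_sorted; exact: lexle_total. Qed.

Lemma memC m : m \in C <-> exists b' k, [/\ b' \in Bp, (k < B)%N & m = (b' + Xpow n j k)%MM].
Proof.
rewrite /Cset mem_sort mem_undup; split.
  by case/allpairsP => -[b' k] /= [H1 H2 ->]; exists b', k; rewrite mem_iota in H2.
case=> b' [k [H1 H2 ->]]; apply/allpairsP; exists (b', k); split => //.
by rewrite mem_iota.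
Qed.

Lemma C_mono m : m \in C -> mono_from j m.
Proof.
case/memC => b' [k [H1 _ ->]]; apply: mono_fromD; last exact: Xpow_mono.
exact/mono_fromS/HBp.
Qed.

Local Notation N := (size C).
Local Notation Cn q := (nth 0%MM C q).

Lemma Cn_mono (q : 'I_N) : mono_from j (Cn q).
Proof. by apply: C_mono; apply: mem_nth. Qed.

Lemma Cn_inj (q1 q2 : 'I_N) : Cn q1 = Cn q2 -> q1 = q2.
Proof.
move=> E; apply: val_inj; apply/eqP; rewrite -(nth_uniq 0%MM _ _ C_uniq) ?E //; exact: ltn_ord.
Qed.

Lemma Cn_lt (q1 q2 : 'I_N) : (q1 < q2)%N -> lexlt (Cn q1) (Cn q2).
Proof.
move=> lt.
have H : lexle (Cn q1) (Cn q2).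
  by apply: (sorted_ltn_nth (@lexle_trans n) 0%MM C_sorted); rewrite ?inE /= ?ltn_ord.
have ne : Cn q1 != Cn q2.
  by apply/eqP => /Cn_inj E; move: lt; rewrite E ltnn.
by case/orP: H => // /eqP E; rewrite E eqxx in ne.
Qed.

Lemma Cn_ltE (q1 q2 : 'I_N) : lexlt (Cn q1) (Cn q2) -> (q1 < q2)%N.
Proof.
move=> H; case: (ltngtP q1 q2) => // [lt|E].
  by have := Cn_lt lt; rewrite lexltNge (lexle_ltW H).
by move: H; rewrite (_ : q1 = q2) ?lexltNge ?lexle_refl //; apply: val_inj.
Qed.

End CS.

Section MM.
Variables (K : fieldType) (n t : nat) (u : 'I_t -> 'X_{1..n} -> K) (C : seq 'X_{1..n}).
Local Notation N := (size C).
Local Notation Cn q := (nth 0%MM C q).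

Definition fl (lam : 'I_N -> K) : {mpoly K[n]} := \sum_q lam q *: 'X_[Cn q].


Lemma pair_fl i (a : 'I_N) lam :
  pairing (u i) ('X_[Cn a] * fl lam) = \sum_(q < N) pairing (u i) 'X_[(Cn a + Cn q)%MM] * lam q.
Proof.
rewrite /fl mulr_sumr pairing_sum; apply: eq_bigr => q _.
by rewrite -scalerAr -mpolyXD pairingZ mulrC.
Qed.

Lemma MmatE r q : Mmat u C r q =
  pairing (u (enum_val r).1) 'X_[(Cn (enum_val r).2 + Cn q)%MM].
Proof. by rewrite mxE; case: (enum_val r). Qed.

Lemma Mker_iff lam : (forall r, \sum_q Mmat u C r q * lam q = 0) <->
  (forall i (a : 'I_N), pairing (u i) ('X_[Cn a] * fl lam) = 0).
Proof.
split => H.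
  move=> i a; rewrite pair_fl -[RHS](H (enum_rank (i, a))).
  by apply: eq_bigr => q _; rewrite MmatE enum_rankK.
move=> r; rewrite -[RHS](H (enum_val r).1 (enum_val r).2) pair_fl.
by apply: eq_bigr => q _; rewrite MmatE.
Qed.

Lemma fl_coef lam m : (fl lam)@_m = \sum_(q < N) lam q * (Cn q == m)%:R.
Proof.
rewrite /fl (raddf_sum (mcoeff m)); apply: eq_bigr => q _ /=; by rewrite mcoeffZ mcoeffX.
Qed.

End MM.
Arguments fl {K n} C lam.

Section P1.
Variables (K : fieldType) (n t : nat) (u : 'I_t -> 'X_{1..n} -> K) (B j : nat) (Bp : seq 'X_{1..n}).
Hypothesis HBp : forall b, b \in Bp -> mono_from j.+1 b.
Local Notation C := (Cset j Bp B).
Local Notation N := (size C).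
Local Notation Cn q := (nth 0%MM C q).

Lemma fl_poly (lam : 'I_N -> K) : poly_from j (fl C lam).
Proof.
apply: poly_from_sum => q _; apply: poly_fromZ; apply: poly_fromX; exact: (Cn_mono HBp).
Qed.

Lemma fl_lead (lam : 'I_N -> K) cc : lam cc = 1 -> (forall q : 'I_N, (cc < q)%N -> lam q = 0) ->
  is_lexlead (fl C lam) (Cn cc).
Proof.
move=> H1 H2; split.
  rewrite mcoeff_msupp fl_coef (bigD1 cc) //= eqxx H1 mulr1 big1 ?addr0 ?oner_neq0 //.
  move=> q ne; case: eqP => [/Cn_inj E|_]; last by rewrite mulr0.
  by rewrite E eqxx in ne.
move=> m'; rewrite mcoeff_msupp fl_coef; apply: contraTT => Hn.
rewrite negbK; apply/eqP; apply: big1 => q _; case: (ltnP cc q) => [lt|le]; first by rewrite H2 // mul0r.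
case: eqP => [E|_]; last by rewrite mulr0.
case/negP: Hn; rewrite -E.
case: (ltngtP q cc) le => // [lt _|E' _]; first exact/lexle_ltW/Cn_lt.
by rewrite (_ : q = cc) ?lexle_refl //; apply: val_inj.
Qed.

Lemma Mker_Jj (lam : 'I_N -> K) : Jj u j (fl C lam) ->
  forall r, \sum_q Mmat u C r q * lam q = 0.
Proof.
move=> H; apply/Mker_iff => i a; apply: Jj_pair; apply: (JjXM (j := j)) => //; exact: (Cn_mono HBp).
Qed.

Lemma Rker_of R (lam : 'I_N -> K) : rref_of (Mmat u C) R ->
  (forall r, \sum_q Mmat u C r q * lam q = 0) -> forall r, \sum_q R r q * lam q = 0.
Proof. by case=> _ [P _ ->]; apply: ker_mul. Qed.

Lemma Mker_of R (lam : 'I_N -> K) : rref_of (Mmat u C) R ->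
  (forall r, \sum_q R r q * lam q = 0) -> forall r, \sum_q Mmat u C r q * lam q = 0.
Proof.
case=> _ [P HP ->] H; rewrite -(mulKmx HP (Mmat u C)); exact: ker_mul.
Qed.

Lemma part1_core R : rref_of (Mmat u C) R ->
  forall lam : 'I_N -> K, (forall q, lam q != 0 -> pivot_col R q) ->
  Jj u j (fl C lam) -> forall q, lam q = 0.
Proof.
move=> HR lam Hp HJ q; have HK := Rker_of HR (Mker_Jj HJ).
have HRR : is_rref R by case: HR.
case: (boolP (pivot_col R q)) => [/pivotP [i Hi]|Hn]; last first.
  by apply/eqP; apply: contraNT Hn; apply: Hp.
rewrite -[RHS](HK i) (bigD1 q) //= (piv_one HRR Hi) mul1r big1 ?addr0 // => q' ne.
case: (eqVneq (lam q') 0) => [->|/Hp /pivotP [i' Hi']]; first by rewrite mulr0.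
rewrite (piv_zero HRR Hi') ?mul0r //; apply: contraNneq ne => E.
by move: Hi'; rewrite -E Hi => -[->].
Qed.

End P1.

Lemma XpowE n j k (i : 'I_n) : Xpow n j k i = if (i : nat) == j.-1 then k else 0%N.
Proof. by rewrite /Xpow mnmE. Qed.

Section P2.
Variables (K : fieldType) (n t : nat) (u : 'I_t -> 'X_{1..n} -> K) (B j : nat) (Bp : seq 'X_{1..n}).
Hypothesis HBp : forall b, b \in Bp -> mono_from j.+1 b.
Hypothesis Hj1 : (1 <= j)%N.
Hypothesis Hjn : (j < n)%N.
Hypothesis HB : forall k : 'I_n, exists p : {poly K},
      p != 0 /\ (size p <= B.+1)%N /\ ann u (map_poly (@mpolyC n K) p).['X_k].
Hypothesis Hstd : forall m, m \in Bp <-> std_mono u j.+1 m.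
Hypothesis HJ : forall f, (Jj u j f /\ poly_from j.+1 f) <-> Jj u j.+1 f.

Local Notation C := (Cset j Bp B).
Local Notation N := (size C).
Local Notation Cn q := (nth 0%MM C q).

Lemma jlt : (j.-1 < n)%N. Proof. lia. Qed.
Local Notation jo := (Ordinal jlt).

Lemma Xpow_inj k1 k2 : Xpow n j k1 = Xpow n j k2 -> k1 = k2.
Proof. by move/mnmP/(_ jo); rewrite !XpowE /= eqxx. Qed.

Lemma Xpow_le k1 k2 : (k1 <= k2)%N -> lexle (Xpow n j k1) (Xpow n j k2).
Proof.
rewrite leq_eqVlt => /orP[/eqP->|lt]; first exact: lexle_refl.
apply: lexle_ltW; apply/existsP; exists jo; apply/andP; split; last by rewrite !XpowE /= eqxx.
apply/forallP => k; apply/implyP => /= Hk; rewrite !XpowE.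
by have -> : ((k : nat) == j.-1) = false by apply/negbTE; rewrite neq_ltn Hk.
Qed.

Lemma BinC m : std_mono u j m -> m \in C.
Proof.
move=> [Hm Hs].
pose m2 := [multinom (if (i : nat) == j.-1 then 0%N else m i) | i < n].
have Em : m = (m2 + Xpow n j (m jo))%MM.
  apply/mnmP => i; rewrite mnmDE XpowE mnmE; case: eqP => [E|_]; last by rewrite addn0.
  by rewrite add0n; congr (m _); apply: val_inj.
have Hm2 : mono_from j.+1 m2.
  move=> i Hi; rewrite mnmE; case: eqP => // ne; apply: Hm; lia.
have Bm2 : m2 \in Bp.
  apply/Hstd; split => // -[f [Hf Hl]].
  have Hf' : Jj u j f by exact: (proj2 (HJ f) Hf).1.
  apply: Hs; exists ('X_[Xpow n j (m jo)] * f); split.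
    by apply: JjXM => //; exact: Xpow_mono.
  by have := @lead_XM _ _ f m2 (Xpow n j (m jo)) Hl; rewrite addmC -Em.
have Hk : (m jo < B)%N.
  rewrite ltnNge; apply/negP => HBk.
  case: (HB jo) => p [p0 [sp Hann]].
  pose d := (size p).-1.
  have sp0 : (0 < size p)%N by rewrite size_poly_gt0.
  pose q := (map_poly (@mpolyC n K) p).['X_jo].
  have Eq : q = \sum_(i < size p) p`_i *: 'X_[Xpow n j i].
    rewrite /q horner_coef size_map_poly; apply: eq_bigr => i _.
    rewrite coef_map /= mul_mpolyC mpolyXn; congr (_ *: 'X_[_]).
    apply/mnmP => i'; rewrite mulmnE mnm1E XpowE.
    have -> : (jo == i') = ((i' : nat) == j.-1) by rewrite -(inj_eq val_inj) eq_sym.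
    by case: eqP => _; rewrite ?mul1n ?mul0n.
  have qI : Jj u j q.
    apply: ann_Jj => //; rewrite Eq; apply: poly_from_sum => i _.
    by apply: poly_fromZ; apply: poly_fromX; exact: Xpow_mono.
  have qc m' : q@_m' = \sum_(i < size p) p`_i * (Xpow n j i == m')%:R.
    rewrite Eq (raddf_sum (mcoeff m')); apply: eq_bigr => i _ /=.
    by rewrite mcoeffZ mcoeffX.
  have ql : is_lexlead q (Xpow n j d).
    have dlt : (d < size p)%N by rewrite /d; lia.
    split.
      rewrite mcoeff_msupp qc (bigD1 (Ordinal dlt)) //= eqxx mulr1 big1 ?addr0.
        by rewrite -lead_coefE lead_coef_eq0.
      move=> i ne; case: eqP => [/Xpow_inj E|_]; last by rewrite mulr0.
      by move: ne; rewrite -(inj_eq val_inj) /= E eqxx.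
    move=> m'; rewrite mcoeff_msupp qc; apply: contraTT => Hn.
    rewrite negbK; apply/eqP; apply: big1 => i _; case: eqP => [E|_]; last by rewrite mulr0.
    case/negP: Hn; rewrite -E; apply: Xpow_le; rewrite /d; have := ltn_ord i; lia.
  pose a := (m - Xpow n j d)%MM.
  have Ea : m = (a + Xpow n j d)%MM.
    apply/mnmP => i; rewrite mnmDE mnmBE XpowE; case: eqP => [E|_]; last by rewrite subn0 addn0.
    rewrite subnK //; have -> : i = jo by apply: val_inj.
    rewrite /d; lia.
  apply: Hs; exists ('X_[a] * q); split; last by rewrite Ea; exact: lead_XM.
  apply: JjXM => // i Hi; rewrite mnmBE Hm //.
rewrite Em; apply/memC; exists m2, (m jo); split => //.
Qed.


Lemma fl_lin (a b : 'I_N -> K) c :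
  fl C (fun q => a q + c * b q) = fl C a + c *: fl C b.
Proof.
rewrite /fl scaler_sumr -big_split; apply: eq_bigr => q _ /=.
by rewrite scalerDl scalerA.
Qed.

Lemma fl0 : fl C (fun _ => 0 : K) = 0.
Proof. by rewrite /fl big1 // => q _; rewrite scale0r. Qed.

Lemma fl_delta (c : 'I_N) : fl C (fun q => (q == c)%:R : K) = 'X_[Cn c].
Proof.
rewrite /fl (bigD1 c) //= eqxx scale1r big1 ?addr0 // => q ne.
by rewrite (negbTE ne) scale0r.
Qed.

Definition ST1 m := exists lam : 'I_N -> K,
  (forall q, lam q != 0 -> std_mono u j (Cn q) /\ lexle (Cn q) m) /\
  Jj u j ('X_[m] - fl C lam).

Lemma STpoly m (IH : forall m', lexlt m' m -> mono_from j m' -> ST1 m') h :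
  poly_from j h -> (forall m', m' \in msupp h -> lexlt m' m) ->
  exists lam : 'I_N -> K,
  (forall q, lam q != 0 -> std_mono u j (Cn q) /\ lexlt (Cn q) m) /\
  Jj u j (h - fl C lam).
Proof.
move=> Ph Hh.
suff : forall s, {subset s <= msupp h} -> exists lam : 'I_N -> K,
  (forall q, lam q != 0 -> std_mono u j (Cn q) /\ lexlt (Cn q) m) /\
  Jj u j (\sum_(m' <- s) h@_m' *: 'X_[m'] - fl C lam).
  by move=> /(_ (msupp h)) H; rewrite {1}(mpolyE h); apply: H.
elim=> [|m' s IHs] Hs.
  exists (fun _ => 0); split => [q|]; first by rewrite eqxx.
  by rewrite big_nil fl0 subrr; exact: Jj0.
have [lam1 [H1 J1]] : exists lam : 'I_N -> K,
  (forall q, lam q != 0 -> std_mono u j (Cn q) /\ lexlt (Cn q) m) /\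
  Jj u j (\sum_(m' <- s) h@_m' *: 'X_[m'] - fl C lam).
  by apply: IHs => x xs; apply: Hs; rewrite inE xs orbT.
have m's : m' \in msupp h by apply: Hs; rewrite inE eqxx.
have [lam2 [H2 J2]] := IH m' (Hh m' m's) (Ph m' m's).
exists (fun q => lam1 q + h@_m' * lam2 q); split.
  move=> q Hq; case: (eqVneq (lam1 q) 0) => [E|]; last exact: H1.
  have : lam2 q != 0 by apply: contraNneq Hq => E2; rewrite E E2 mulr0 addr0.
  move/H2 => [S L]; split => //; exact: lexle_lt_trans L (Hh m' m's).
rewrite fl_lin big_cons.
have -> : h@_m' *: 'X_[m'] + \sum_(m'0 <- s) h@_m'0 *: 'X_[m'0] - (fl C lam1 + h@_m' *: fl C lam2)
  = (\sum_(m'0 <- s) h@_m'0 *: 'X_[m'0] - fl C lam1) + h@_m' *: ('X_[m'] - fl C lam2).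
  by rewrite scalerBr; move: (h@_m' *: _) (h@_m' *: fl C lam2) => x y; ring.
by apply: JjD => //; apply: JjZ.
Qed.

Lemma reduce f m : Jj u j f -> is_lexlead f m -> mono_from j m ->
  exists h, [/\ poly_from j h, (forall m', m' \in msupp h -> lexlt m' m) &
    Jj u j ('X_[m] - h)].
Proof.
move=> Hf [Hm Hle] Hmm.
have cf0 : f@_m != 0 by rewrite -mcoeff_msupp.
exists ('X_[m] - (f@_m)^-1 *: f); split.
- apply: poly_fromB; [exact: poly_fromX | apply: poly_fromZ; exact: Jj_poly Hf].
- move=> m' Hm'.
  have Hl : lexle m' m.
    move/msuppB_le: Hm'; rewrite mem_cat msuppX mem_seq1 => /orP[/eqP->|/msuppZ_le].
      exact: lexle_refl.
    exact: Hle.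
  case/orP: Hl => [/eqP E|//]; move: Hm'; rewrite E mcoeff_msupp mcoeffB mcoeffZ mcoeffX eqxx.
  by rewrite mulVf // subrr eqxx.
- by rewrite opprB addrC subrK; apply: JjZ.
Qed.

Lemma ST1_all m : mono_from j m -> ST1 m.
Proof.
elim/lex_ind: m => m IH Hm.
case: (classic (std_mono u j m)) => Hs.
  have mC := BinC Hs.
  have ci : (index m C < N)%N by rewrite index_mem.
  pose c : 'I_N := Ordinal ci.
  have Ec : Cn c = m by rewrite /= nth_index.
  exists (fun q => (q == c)%:R); split.
    move=> q; case: (eqVneq q c) => [->|ne]; last by rewrite eqxx.
    by move=> _; rewrite Ec; split => //; exact: lexle_refl.
  by rewrite fl_delta Ec subrr; exact: Jj0.
have [f [Hf Hl]] : exists f, Jj u j f /\ is_lexlead f m.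
  apply: NNPP => H; apply: Hs; by split.
have [h [Ph Hh Jh]] := reduce Hf Hl Hm.
have [lam [H1 H2]] := STpoly (fun m' L M => IH m' L M) Ph Hh.
exists lam; split.
  by move=> q /H1 [S L]; split => //; exact: lexle_ltW.
have -> : 'X_[m] - fl C lam = ('X_[m] - h) + (h - fl C lam) by rewrite addrA subrK.
exact: JjD.
Qed.

Lemma KEY f : poly_from j f ->
  (forall i (a : 'I_N), pairing (u i) ('X_[Cn a] * f) = 0) -> Jj u j f.
Proof.
move=> Pf H; split => // i m Hm.
have [lam [_ J]] := ST1_all Hm.
have -> : 'X_[m] * f = f * ('X_[m] - fl C lam) + fl C lam * f.
  by rewrite mulrBr [fl C lam * f]mulrC subrK mulrC.
rewrite pairingD (@Jj_pair _ _ _ u j) ?add0r; last exact: JjM.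
rewrite /fl mulr_suml pairing_sum big1 // => q _.
by rewrite -scalerAl pairingZ H mulr0.
Qed.

Lemma LAM f (c : 'I_N) : Jj u j f -> is_lexlead f (Cn c) ->
  exists lam : 'I_N -> K, [/\ lam c = 1, (forall q : 'I_N, (c < q)%N -> lam q = 0) &
    Jj u j (fl C lam)].
Proof.
move=> Hf Hl.
have [h [Ph Hh Jh]] := reduce Hf Hl (Cn_mono HBp c).
have [lam [H1 H2]] := STpoly (fun m' _ Hm' => ST1_all Hm') Ph Hh.
have l0 (q : 'I_N) : (c <= q)%N -> lam q = 0.
  move=> le; apply/eqP; apply: contraT => /H1 [_ L].
  by have := Cn_ltE L; rewrite ltnNge le.
exists (fun q => (q == c)%:R + (-1) * lam q); split.
- by rewrite eqxx l0 // mulr0 addr0.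
- move=> q lt; rewrite l0 ?(ltnW lt) // mulr0 addr0.
  by have -> : (q == c) = false by apply/negbTE; rewrite neq_ltn lt orbT.
- rewrite fl_lin fl_delta scaleN1r.
  have -> : 'X_[Cn c] - fl C lam = ('X_[Cn c] - h) + (h - fl C lam) by rewrite addrA subrK.
  exact: JjD.
Qed.

Lemma piv_iff R (HR : rref_of (Mmat u C) R) (c : 'I_N) :
  pivot_col R c <-> std_mono u j (Cn c).
Proof.
have HRR : is_rref R by case: HR.
split.
  move=> /pivotP [i Hi]; split; first exact: (Cn_mono HBp).
  move=> [f [Hf Hl]]; have [lam [L1 L2 L3]] := LAM Hf Hl.
  have := Rker_of HR (Mker_Jj HBp L3) i.
  by rewrite (PV3 HRR Hi L1 L2) => /eqP; rewrite oner_eq0.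
move=> [_ Hs]; apply: contraT => Hn.
have [lam [L1 L2 L3]] := PV2 HRR Hn.
have MK := Mker_of HR L3.
have JJ : Jj u j (fl C lam) by apply: KEY; [exact: fl_poly | exact/Mker_iff].
by exfalso; apply: Hs; exists (fl C lam); split => //; exact: fl_lead.
Qed.

End P2.
Unset Implicit Arguments.
Theorem lemma6 (K : fieldType) (n t : nat) (u : 'I_t -> 'X_{1..n} -> K) (B : nat)
    (j : nat) (Bp : seq 'X_{1..n}) :
  perfect_field K ->
  (* J = ann(u_1,...,u_t) is zero-dimensional *)
  finite_quot (ann u) ->
  (* the minimal polynomial of each X_k in K[X]/J has degree <= B *)
  (forall k : 'I_n, exists p : {poly K},
      p != 0 /\ (size p <= B.+1)%N /\ ann u (map_poly (@mpolyC n K) p).['X_k]) ->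
  (1 <= j <= n)%N ->
  (* B'_{j+1} : monomials of K[X_{j+1},...,X_n], of cardinality <= D_{j+1} *)
  uniq Bp ->
  (forall b, b \in Bp -> mono_from j.+1 b) ->
  (j = n -> Bp = [:: 0%MM]) ->
  (size Bp <= Dj u j.+1)%N ->
  let C := Cset j Bp B in
  forall R : 'M[K]_(#|{: 'I_t * 'I_(size C)}|, size C),
    rref_of (Mmat u C) R ->
  let Bpj := map (fun p : 'I_(size C) => nth 0%MM C p)
                 [seq p <- enum 'I_(size C) | pivot_col R p] in
  (size Bpj <= Dj u j)%N /\
  ((j <= n.-1)%N ->
   (forall m, m \in Bp <-> std_mono u j.+1 m) ->
   (forall f, (Jj u j f /\ poly_from j.+1 f) <-> Jj u j.+1 f) ->
   forall m, m \in Bpj <-> std_mono u j m).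
Proof.
move=> _ Hfin HB /andP[Hj1 Hjn] _ HBp _ _ C R HR Bpj.
split.
  have Hd : exists d, forall s, (forall p, p \in s -> poly_from j p) ->
      free_mod (Jj u j) s -> (size s <= d)%N.
    case: Hfin => d Hd; exists d => s Ps Fs; apply: Hd => c Hc i; apply: Fs.
    apply: ann_Jj => //; apply: poly_from_sum => k _; apply: poly_fromZ; apply: Ps.
    exact/mem_nth/ltn_ord.
  case: Hd => d Hd.
  pose piv := [seq p <- enum 'I_(size C) | pivot_col R p].
  have -> : size Bpj = size (map (fun q : 'I_(size C) => ('X_[nth 0%MM C q] : {mpoly K[n]})) piv).
    by rewrite /Bpj !size_map.
  rewrite /Dj; apply: (qdim_bound Hd).
    by move=> p /mapP [q _ ->]; apply: poly_fromX; exact: (Cn_mono HBp).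
  apply: free_map; first by rewrite filter_uniq // enum_uniq.
  move=> lam Hl k kin.
  pose lam' q := if pivot_col R q then lam q else 0.
  have E : fl C lam' = \sum_(k <- piv) lam k *: 'X_[nth 0%MM C k].
    rewrite /fl big_filter [RHS]big_mkcond /= big_enum /=; apply: eq_bigr => q _.
    by rewrite /lam'; case: (pivot_col R q) => //; rewrite scale0r.
  have := part1_core HBp HR (lam := lam') _ _ k.
  rewrite /lam'; move: kin; rewrite mem_filter => /andP[-> _]; apply.
    by move=> q; case: (pivot_col R q) => //; rewrite eqxx.
  by rewrite E.
move=> Hjn' Hstd HJ m.
have Hjn2 : (j < n)%N by lia.
split.
  move/mapP => [p pin ->]; move: pin; rewrite mem_filter => /andP[pv _].
  exact/(piv_iff HBp Hj1 Hjn2 HB Hstd HJ HR p).1.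
move=> Hs; have mC := BinC Hj1 Hjn2 HB Hstd HJ Hs.
have ci : (index m C < size C)%N by rewrite index_mem.
have Ec : nth 0%MM C (Ordinal ci) = m by rewrite /= nth_index.
apply/mapP; exists (Ordinal ci) => //.
rewrite mem_filter mem_enum andbT; apply/(piv_iff HBp Hj1 Hjn2 HB Hstd HJ HR (Ordinal ci)).2.
by rewrite Ec.
Qed.
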